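(* Fix $\epsilon>0$ and define the relation $P$ on $\mathbb R$ by $(x,y)\in P\iff x+\epsilon\geq y$. Let $\chi$ be the indicator function of the open interval $(-1,1)$, let $f(t)=t+(1-t^2)\chi(t)$, and let $\mathcal V=\{v_\alpha:\alpha\in\mathbb R\}$ where $v_\alpha(x)=f\big(\tfrac{x-\alpha}{\epsilon}\big)$. Then each $v_\alpha$ is continuous, $P$ is complete and negatively transitive but not transitive, and for all $x,y\in\mathbb R$: $(x,y)\in P\iff\exists\alpha\in\mathbb R,\ v_\alpha(x)\geq v_\alpha(y)$.
   Context: $P$ is complete if for all $x,y$, $(x,y)\in P$ or $(y,x)\in P$; negatively transitive if $(x,y)\notin P$ and $(y,z)\notin P$ imply $(x,z)\notin P$; transitive if $(x,y),(y,z)\in P$ imply $(x,z)\in P$. *)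

(* Defs.v *)
From Stdlib Require Import Reals.
Open Scope R_scope.

Definition complete (P : R -> R -> Prop) : Prop :=
  forall x y, P x y \/ P y x.
Definition negatively_transitive (P : R -> R -> Prop) : Prop :=
  forall x y z, ~ P x y -> ~ P y z -> ~ P x z.
Definition transitive (P : R -> R -> Prop) : Prop :=
  forall x y z, P x y -> P y z -> P x z.

Definition Prel (eps : R) (x y : R) : Prop := x + eps >= y.

Definition chi (t : R) : R :=
  if Rlt_dec (-1) t then (if Rlt_dec t 1 then 1 else 0) else 0.

Definition f (t : R) : R := t + (1 - t ^ 2) * chi t.

Definition v (eps alpha : R) (x : R) : R := f ((x - alpha) / eps).

(* Main.v *)
Require Import Defs.
From Stdlib Require Import Reals Lra FunctionalExtensionality.
Open Scope R_scope.

Lemma f_alt (t:R) : Defs.f t = t + (1 - t^2 + Rabs (1 - t^2)) / 2.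
Proof.
  unfold Defs.f, chi.
  destruct (Rlt_dec (-1) t); [destruct (Rlt_dec t 1)|].
  - rewrite Rabs_right by nra. lra.
  - rewrite Rabs_left1 by nra. lra.
  - rewrite Rabs_left1 by nra. lra.
Qed.

Lemma f_lo (t:R) : t <= Defs.f t.
Proof. rewrite f_alt. pose proof (Rle_abs (-(1-t^2))). rewrite Rabs_Ropp in H. lra. Qed.

Lemma f_hi (t:R) : Defs.f t <= t + 1.
Proof.
  unfold Defs.f, chi.
  destruct (Rlt_dec (-1) t); [destruct (Rlt_dec t 1)|]; nra.
Qed.

Lemma f_ge1 (s:R) : 0 <= s -> 1 <= Defs.f s.
Proof.
  intro H. unfold Defs.f, chi.
  destruct (Rlt_dec (-1) s); [destruct (Rlt_dec s 1)|]; nra.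
Qed.

Theorem mainTheorem4 (eps : R) (heps : eps > 0) :
  (forall alpha : R, continuity (v eps alpha)) /\
  complete (Prel eps) /\
  negatively_transitive (Prel eps) /\
  ~ transitive (Prel eps) /\
  (forall x y : R, Prel eps x y <-> exists alpha : R, v eps alpha x >= v eps alpha y).
Proof.
  unfold complete, negatively_transitive, transitive, Prel.
  split; [|split; [|split; [|split]]].
  - intro alpha.
    replace (v eps alpha) with (fun x => (x - alpha)/eps + (1 - ((x - alpha)/eps)^2 + Rabs (1 - ((x - alpha)/eps)^2)) / 2).
    2:{ apply functional_extensionality; intro x; unfold v; rewrite f_alt; reflexivity. }
    intro x. unfold Rdiv. reg.
  - intros x y; lra.
  - intros x y z; lra.
  - intro H. specialize (H 0 eps (2*eps)). lra.
  - intros x y; split.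
    + intro H. exists (y - eps). unfold v.
      replace ((y - (y-eps))/eps) with 1 by (field; lra).
      apply Rle_ge. replace (Defs.f 1) with 1 by (unfold Defs.f, chi; destruct (Rlt_dec (-1) 1); destruct (Rlt_dec 1 1); lra).
      apply f_ge1. replace ((x - (y - eps)) / eps) with ((x + eps - y)/eps) by (f_equal; ring).
      apply Rmult_le_pos; [lra|]. left; apply Rinv_0_lt_compat; lra.
    + intros [alpha H]. unfold v in H.
      pose proof (f_lo ((y-alpha)/eps)). pose proof (f_hi ((x-alpha)/eps)).
      assert ((y-alpha)/eps <= (x-alpha)/eps + 1) by lra.
      apply Rmult_le_compat_r with (r := eps) in H2; [|lra].
      unfold Rdiv in H2. rewrite Rmult_plus_distr_r, !Rmult_assoc, Rinv_l in H2; lra.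
Qed.
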